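(* Let $G$ be a simple graph on $n$ vertices with at least one edge that is both vertex-transitive and edge-transitive, and suppose $\alpha(G)\,\omega(G)=n$. Then $G$ is $k$-regular for some $k$ and $$\lambda(G)=-\frac{k}{\omega(G)-1}.$$
   Context: $\lambda(G)$ is the smallest adjacency eigenvalue, $\alpha(G)$ the independence number and $\omega(G)$ the clique number of $G$. *)

(* Defs.v *)
From HB Require Import structures.
From mathcomp Require Import all_boot all_order all_algebra all_fingroup all_field.
Set Implicit Arguments. Unset Strict Implicit. Unset Printing Implicit Defensive.
Import Order.TTheory GRing.Theory Num.Theory.

Definition simple_graph (n : nat) (e : rel 'I_n) : Prop :=
  symmetric e /\ irreflexive e.

Definition has_edge (n : nat) (e : rel 'I_n) : Prop := exists x y, e x y.

Definition is_aut (n : nat) (e : rel 'I_n) (s : {perm 'I_n}) : Prop :=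
  forall x y, e (s x) (s y) = e x y.

Definition vertex_transitive (n : nat) (e : rel 'I_n) : Prop :=
  forall x y, exists s : {perm 'I_n}, is_aut e s /\ s x = y.

Definition edge_transitive (n : nat) (e : rel 'I_n) : Prop :=
  forall x y u v, e x y -> e u v ->
    exists s : {perm 'I_n}, is_aut e s /\
      ((s x = u /\ s y = v) \/ (s x = v /\ s y = u)).

Definition independent (n : nat) (e : rel 'I_n) (S : {set 'I_n}) : bool :=
  [forall x in S, forall y in S, ~~ e x y].

Definition clique (n : nat) (e : rel 'I_n) (S : {set 'I_n}) : bool :=
  [forall x in S, forall y in S, (x != y) ==> e x y].

Definition alpha (n : nat) (e : rel 'I_n) : nat :=
  \max_(S : {set 'I_n} | independent e S) #|S|.

Definition omega (n : nat) (e : rel 'I_n) : nat :=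
  \max_(S : {set 'I_n} | clique e S) #|S|.

Definition regular (n : nat) (e : rel 'I_n) (k : nat) : Prop :=
  forall x, #|[set y | e x y]| = k.

Definition adj_mx (n : nat) (e : rel 'I_n) : 'M[algC]_n :=
  \matrix_(i, j) ((e i j)%:R)%R.

Definition smallest_eigenvalue (n : nat) (A : 'M[algC]_n) (l : algC) : Prop :=
  eigenvalue A l /\ (forall m, eigenvalue A m -> (l <= m)%R).

(* Main.v *)
Require Import Defs.
From mathcomp Require Import all_boot all_order all_algebra all_fingroup all_field.
From mathcomp Require Import ring.
Set Implicit Arguments. Unset Strict Implicit. Unset Printing Implicit Defensive.
Import Order.TTheory GRing.Theory Num.Theory.

Section Pf.
Variables (n : nat) (e : rel 'I_n).
Hypothesis esym : symmetric e.
Hypothesis eirr : irreflexive e.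

Definition autb (s : {perm 'I_n}) := [forall x, forall y, e (s x) (s y) == e x y].

Lemma autbP s : reflect (is_aut e s) (autb s).
Proof.
apply: (iffP forallP) => [H x y|H x]; first exact/eqP/(forallP (H x) y).
by apply/forallP => y; rewrite H.
Qed.

Lemma autE s x y : autb s -> e (s x) (s y) = e x y.
Proof. by move/autbP. Qed.

Lemma aut_mul s t : autb s -> autb t -> autb (s * t).
Proof. by move=> hs ht; apply/autbP => x y; rewrite !permM autE // autE. Qed.

Lemma aut_inv s : autb s -> autb s^-1.
Proof. by move=> hs; apply/autbP => x y; rewrite -(autE _ _ hs) !permKV. Qed.

Lemma aut_mulE s g : autb s -> autb (s * g) = autb g.
Proof.
move=> hs; apply/idP/idP => [h|]; last exact: aut_mul.
by rewrite -(mulKg s g); apply: aut_mul => //; apply: aut_inv.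
Qed.

Lemma cliqueP S x y : clique e S -> x \in S -> y \in S -> x != y -> e x y.
Proof.
move=> /forallP H xS yS; move: (H x); rewrite xS /= => /forallP /(_ y).
by rewrite yS /= => /implyP.
Qed.

Lemma indepP S x y : independent e S -> x \in S -> y \in S -> e x y = false.
Proof.
move=> /forallP H xS yS; move: (H x); rewrite xS /= => /forallP /(_ y).
by rewrite yS /= => /negbTE.
Qed.

Lemma max_attained (P : pred {set 'I_n}) :
  P set0 -> exists2 S, P S & \max_(S | P S) #|S| = #|S|.
Proof.
move=> P0; rewrite (bigop.bigmax_eq_arg set0) //.
by case: arg_maxnP => // S PS _; exists S.
Qed.

Variable C : {set 'I_n}.
Hypothesis Ccl : clique e C.

Definition N x y := \sum_(g | autb g) (((g x \in C) && (g y \in C)) : nat).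

Lemma N_aut s x y : autb s -> N (s x) (s y) = N x y.
Proof.
move=> hs; rewrite [RHS]/N (reindex_inj (mulgI s)) /=.
by apply: eq_big => [g|g _]; rewrite ?aut_mulE // !permM.
Qed.

Lemma N_sym x y : N x y = N y x.
Proof. by apply: eq_bigr => g _; rewrite andbC. Qed.

Lemma N_nonedge x y : x != y -> ~~ e x y -> N x y = 0.
Proof.
move=> xy nexy; apply: big1 => g hg.
case: (boolP (g x \in C)) => // gx; case: (boolP (g y \in C)) => // gy.
have : e (g x) (g y).
  apply: (cliqueP Ccl gx gy). rewrite (inj_eq (@perm_inj _ g)) //.

by rewrite (autE _ _ hg) (negbTE nexy).
Qed.


Lemma sum_ind_perm (g : {perm 'I_n}) : \sum_y ((g y \in C) : nat) = #|C|.
Proof.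
rewrite -sum1_card big_mkcond [RHS](reindex_perm g) /=.
rewrite [RHS]big_mkcond; by apply: eq_bigr => y _; case: (g y \in C).
Qed.

Lemma N_row x : \sum_y N x y = (N x x * #|C|)%N.
Proof.
rewrite /N exchange_big big_distrl /=; apply: eq_bigr => g _.
rewrite andbb -(sum_ind_perm g) big_distrr /=; apply: eq_bigr => y _.
by rewrite mulnb.
Qed.

Lemma N_diag_sum : \sum_x N x x = ((\sum_(g | autb g) 1) * #|C|)%N.
Proof.
rewrite /N exchange_big big_distrl /=; apply: eq_bigr => g _.
by rewrite mul1n -(sum_ind_perm g); apply: eq_bigr => y _; rewrite andbb.
Qed.

Lemma t_le1 (I : {set 'I_n}) g : independent e I -> autb g ->
  \sum_(x in I) ((g x \in C) : nat) <= 1.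
Proof.
move=> Iind hg.
case: (pickP [pred x in I | g x \in C]) => [x /andP[xI gx] | none].
  rewrite (bigD1 x) //= gx big1 //= => y /andP[yI yx].
  case gy: (g y \in C) => //.
  have : e (g y) (g x).
    apply: (cliqueP Ccl gy gx); by rewrite (inj_eq (@perm_inj _ g)).
  by rewrite (autE _ _ hg) (indepP Iind yI xI).
rewrite big1 // => y yI; have := none y; rewrite /= yI; by case: (g y \in C).
Qed.

Local Open Scope ring_scope.

Definition chi (g : {perm 'I_n}) x : algC := ((g x \in C) : nat)%:R.

Lemma N_R x y : (N x y)%:R = \sum_(g | autb g) chi g x * chi g y.
Proof. by rewrite natr_sum; apply: eq_bigr => g _; rewrite -mulnb natrM. Qed.

Lemma quad (u v : 'I_n -> algC) :
  \sum_x \sum_y u x * v y * (N x y)%:R =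
  \sum_(g | autb g) (\sum_x u x * chi g x) * (\sum_y v y * chi g y).
Proof.
under eq_bigr => x _ do under eq_bigr => y _ do rewrite N_R mulr_sumr.
under eq_bigr => x _ do rewrite exchange_big.
rewrite exchange_big; apply: eq_bigr => g _.
rewrite mulr_suml; apply: eq_bigr => x _; rewrite mulr_sumr; apply: eq_bigr => y _.
by rewrite mulrACA.
Qed.

Lemma row_chi (v : 'I_n -> algC) x :
  \sum_y v y * (N y x)%:R = \sum_(g | autb g) chi g x * (\sum_y v y * chi g y).
Proof.
under eq_bigr => y _ do rewrite N_R mulr_sumr.
rewrite exchange_big; apply: eq_bigr => g _.
rewrite mulr_sumr; apply: eq_bigr => y _; by rewrite mulrA mulrC.
Qed.

Variables dn cn : nat.
Hypothesis Nd : forall x, N x x = dn.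
Hypothesis Nc : forall x y, e x y -> N x y = cn.

Lemma N_split x y : (N x y)%:R = (x == y)%:R * dn%:R + (e x y)%:R * cn%:R :> algC.
Proof.
case: (eqVneq x y) => [<-|xy]; first by rewrite Nd eirr mul1r mul0r addr0.
case exy: (e x y); first by rewrite Nc // mul0r add0r mul1r.
by rewrite N_nonedge ?exy // !mul0r addr0.
Qed.

Lemma row_split (v : 'I_n -> algC) x :
  \sum_y v y * (N y x)%:R = dn%:R * v x + cn%:R * \sum_y v y * (e y x)%:R.
Proof.
under eq_bigr => y _ do rewrite N_split mulrDr.
rewrite big_split /= mulr_sumr; congr (_ + _).
  rewrite (bigD1 x) //= eqxx big1 ?addr0 ?mul1r 1?mulrC // => y yx.
  by rewrite (negbTE yx) mul0r mulr0.
by apply: eq_bigr => y _; rewrite mulrA mulrC.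
Qed.

End Pf.
Lemma sum_le1_eq (I : finType) (P : pred I) (F : I -> nat) :
  (forall i, P i -> F i <= 1) -> \sum_(i | P i) F i = \sum_(i | P i) 1 ->
  forall i, P i -> F i = 1.
Proof.
move=> h hs i Pi; apply/eqP; rewrite eqn_leq h //= lt0n; apply/negP => /eqP Fi0.
move: hs; rewrite (bigD1 i) //= [in RHS](bigD1 i) //= Fi0 add0n => hs.
have : \sum_(j | P j && (j != i)) F j <= \sum_(j | P j && (j != i)) 1.
  by apply: leq_sum => j /andP[Pj _]; exact: h.
by rewrite hs add1n ltnn.
Qed.

Lemma sum_set n (S : {set 'I_n}) : \sum_y ((y \in S) : nat) = #|S|.
Proof. by rewrite -sum1_card [RHS]big_mkcond; apply: eq_bigr => y _; case: (y \in S). Qed.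

Theorem mainTheorem9 (n : nat) (e : rel 'I_n) :
  simple_graph e -> has_edge e ->
  vertex_transitive e -> edge_transitive e ->
  alpha e * omega e = n ->
  exists k : nat, regular e k /\
    smallest_eigenvalue (adj_mx e)
      (- (k%:R : algC) / ((omega e)%:R - 1))%R.
Proof.
move=> [esym eirr] [x0 [y0 exy0]] vt et han.
have vt' : forall x y, exists2 s, autb e s & s x = y.
  by move=> x y; case: (vt x y) => s [/autbP hs sx]; exists s.
have et' : forall x y u v, e x y -> e u v -> exists2 s, autb e s &
    ((s x = u /\ s y = v) \/ (s x = v /\ s y = u)).
  by move=> x y u v h1 h2; case: (et x y u v h1 h2) => s [/autbP hs H]; exists s.
have [C Ccl wC] : exists2 C, clique e C & omega e = #|C|.
  apply: max_attained; apply/forallP => x; by rewrite in_set0.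
have [I Iind aI] : exists2 I, independent e I & alpha e = #|I|.
  apply: max_attained; apply/forallP => x; by rewrite in_set0.
have xy0 : x0 != y0 by apply: contraTneq exy0 => ->; rewrite eirr.
have w2 : 2 <= omega e.
  rewrite /omega; apply: (bigop.bigmax_sup [set x0; y0]); last by rewrite cards2 xy0.
  apply/forallP => x; apply/implyP; rewrite !inE => /orP[]/eqP->;
    apply/forallP => y; apply/implyP; rewrite !inE => /orP[]/eqP->;
    by rewrite ?eqxx //= ?exy0 ?(esym y0 x0) ?exy0 ?implybT.
pose k := #|[set y | e x0 y]|.
have reg : regular e k.
  move=> x; case: (vt' x0 x) => s hs <-.
  rewrite /k -(card_preimset [set y | e x0 y] (@perm_inj _ s^-1%g)); apply: eq_card => y.
  by rewrite !inE -(autE x0 (s^-1%g y) hs) permKV.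
pose dn := N e C x0 x0; pose cn := N e C x0 y0.
have Nd : forall x, N e C x x = dn.
  by move=> x; case: (vt' x0 x) => s hs <-; rewrite N_aut.
have Nc : forall x y, e x y -> N e C x y = cn.
  move=> x y exy; case: (et' x0 y0 x y exy0 exy) => s hs [[<- <-]|[<- <-]].
    by rewrite N_aut.
  by rewrite N_aut // N_sym.
have cpos : 0 < cn.
  have : 1 < #|C| by rewrite -wC.
  case/card_gt1P => p [q [pC qC pq]].
  have epq := cliqueP Ccl pC qC pq.
  case: (et' x0 y0 p q exy0 epq) => s hs Hs.
  rewrite /cn /N (bigD1 s) //=.
  by case: Hs => [[-> ->]|[-> ->]]; rewrite pC qC.
exists k; split => //.
have Nsplit : forall x y, N e C x y = ((x == y) * dn + e x y * cn)%N.
  move=> x y; case: (eqVneq x y) => [<-|xy]; first by rewrite Nd eirr addn0 mul1n.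
  case exy: (e x y); first by rewrite Nc // mul1n.
  by rewrite (N_nonedge Ccl) // exy.
have wpos : 0 < #|C| by rewrite -wC ltnW.
have relD : (dn * #|C| = dn + k * cn)%N.
  rewrite -(Nd x0) -N_row Nd; under eq_bigr do rewrite Nsplit.
  rewrite big_split /= -!big_distrl /=.
  have -> : (\sum_y ((x0 == y) : nat))%N = 1%N.
    by rewrite (bigD1 x0) //= eqxx big1 // => y /negbTE; rewrite eq_sym => ->.
  have -> : (\sum_y (e x0 y : nat))%N = k.
    by have := sum_set [set y | e x0 y]; under eq_bigr do rewrite inE.
  by rewrite mul1n.
have relR : (k%:R = dn%:R * (#|C|%:R - 1) / cn%:R :> algC)%R.
  have cnz : (cn%:R != 0 :> algC)%R by rewrite pnatr_eq0 -lt0n.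
  apply: (mulIf cnz); rewrite mulfVK //.
  have -> : (#|C|%:R - 1 = (#|C| - 1)%:R :> algC)%R by rewrite natrB.
  rewrite -!natrM mulnBr muln1 relD.
  by rewrite addKn mulnC.
rewrite wC relR.
have cnz : (cn%:R != 0 :> algC)%R by rewrite pnatr_eq0 -lt0n.
have w1z : (#|C|%:R - 1 != 0 :> algC)%R.
  have -> : (#|C|%:R - 1 = (#|C| - 1)%:R :> algC)%R by rewrite natrB.
  by rewrite pnatr_eq0 subn_eq0 -ltnNge -wC.
have -> : (- (dn%:R * (#|C|%:R - 1) / cn%:R) / (#|C|%:R - 1) = - dn%:R / cn%:R :> algC)%R.
  by field; rewrite cnz w1z.
pose Gam := (\sum_(g | autb e g) 1)%N.
have HG : (Gam * #|C| = n * dn)%N.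
  rewrite -N_diag_sum; under eq_bigr do rewrite Nd.
  by rewrite sum_nat_const card_ord.
have HG2 : Gam = (#|I| * dn)%N.
  have hn : (#|I| * #|C|)%N = n by rewrite -aI -wC.
  apply/eqP; rewrite -(eqn_pmul2r wpos) HG; apply/eqP.
  by rewrite mulnAC hn.
have tsum : (\sum_(g | autb e g) \sum_(x in I) ((g x \in C) : nat))%N
            = (\sum_(g | autb e g) 1)%N.
  rewrite exchange_big /= -/Gam HG2 -sum_nat_const; apply: eq_bigr => x _.
  by rewrite -(Nd x); apply: eq_bigr => g _; rewrite andbb.
have tg1 := sum_le1_eq (fun g hg => t_le1 Ccl Iind hg) tsum.
have RS := row_split eirr Ccl Nd Nc.
split.
  pose vf x : algC := (#|C|%:R * (x \in I)%:R - 1)%R.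
  have key : forall x, (\sum_y vf y * (e y x)%:R = - dn%:R / cn%:R * vf x)%R.
    move=> x; have h1 := RS vf x; rewrite row_chi in h1.
    have h3 : forall g, autb e g -> (\sum_y vf y * chi C g y = 0)%R.
      move=> g hg; rewrite /vf.
      under eq_bigr do rewrite mulrBl mul1r -mulrA.
      rewrite sumrB -mulr_sumr.
      have -> : (\sum_y (y \in I)%:R * chi C g y = 1 :> algC)%R.
        rewrite /chi; under eq_bigr do rewrite -natrM.
        rewrite -natr_sum.
        have -> : (\sum_y ((y \in I) * (g y \in C)))%N = (\sum_(y in I) ((g y \in C) : nat))%N.
          by rewrite [RHS]big_mkcond; apply: eq_bigr => y _; case: (y \in I); rewrite ?mul1n ?mul0n.
        by rewrite tg1.
      by rewrite /chi -natr_sum sum_ind_perm mulr1 subrr.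
    rewrite big1 in h1; last by move=> g hg; rewrite h3 // mulr0.
    have H : (cn%:R * \sum_y vf y * (e y x)%:R = - (dn%:R * vf x) :> algC)%R.
      by apply/eqP; rewrite -addr_eq0 addrC -h1.
    rewrite -[LHS](mulKf cnz) H.
    by field.
  apply/eigenvalueP; exists (\row_x vf x)%R.
    apply/rowP => x; rewrite !mxE -key; apply: eq_bigr => y _; by rewrite !mxE.
  have [x1 x1I] : exists x1, x1 \notin I.
    case x0I: (x0 \in I); last by exists x0; rewrite x0I.
    exists y0; apply/negP => y0I; by rewrite (indepP Iind x0I y0I) in exy0.
  apply/eqP => /rowP /(_ x1); rewrite !mxE /vf (negbTE x1I) mulr0 sub0r => /eqP.
  by rewrite oppr_eq0 oner_eq0.
move=> m /eigenvalueP [v vA vnz].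
pose vf x := v ord0 x.
have key : forall x, (\sum_y vf y * (e y x)%:R = m * vf x)%R.
  move=> x; have := congr1 (fun M : 'M[algC]_(1, n) => M ord0 x) vA; rewrite !mxE => <-.
  by apply: eq_bigr => y _; rewrite !mxE.
pose u x := ((vf x)^*)%R.
have Q := quad e C u vf.
have LQ : (\sum_x \sum_y u x * vf y * (N e C x y)%:R
          = (dn%:R + cn%:R * m) * \sum_x u x * vf x)%R.
  rewrite mulr_sumr; apply: eq_bigr => x _.
  under eq_bigr do rewrite N_sym -mulrA.
  rewrite -mulr_sumr RS mulrA key; ring.
have Tge : (0 <= \sum_(g | autb e g) (\sum_x u x * chi C g x) * (\sum_y vf y * chi C g y))%R.
  apply: sumr_ge0 => g _.
  have -> : (\sum_x u x * chi C g x = (\sum_y vf y * chi C g y)^*)%R.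
    rewrite rmorph_sum; apply: eq_bigr => x _; by rewrite rmorphM /= /chi conjC_nat.
  by rewrite mulrC mul_conjC_ge0.
have [x1 hx1] : exists x1, vf x1 != 0%R.
  case: (pickP (fun x => vf x != 0%R)) => [x1 hx1|none]; first by exists x1.
  case/negP: vnz; apply/eqP/rowP => j; rewrite mxE.
  by have := none j => /= /negbFE /eqP.
have Spos : (0 < \sum_x u x * vf x)%R.
  rewrite (bigD1 x1) //=; apply: ltr_wpDr.
    by apply: sumr_ge0 => x _; rewrite /u mulrC mul_conjC_ge0.
  by rewrite /u mulrC mul_conjC_gt0.
have hge : (0 <= dn%:R + cn%:R * m :> algC)%R.
  by rewrite -(pmulr_lge0 _ Spos) -LQ Q.
rewrite -subr_ge0.
have -> : (m - - dn%:R / cn%:R = (dn%:R + cn%:R * m) / cn%:R :> algC)%R.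
  by field.
by rewrite divr_ge0 // ler0n.
Qed.
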